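(* Let $n$ be a positive integer and $p$ an odd prime. Let $S \subseteq \mathbb{Z}_n$ with $0\notin S$, $S=-S$, $|S| = p$, such that the circulant graph $\mathrm{Cay}(\mathbb{Z}_n,S)$ is connected. Then $\mathrm{Cay}(\mathbb{Z}_n,S)$ admits a total perfect code if and only if $p$ divides $n$ and $s \not\equiv s' \pmod p$ for all distinct $s,s'\in S$.
   Context: $\mathbb{Z}_n$ is the additive group of integers modulo $n$; elements are identified with integers in $\{0,1,\dots,n-1\}$ when reducing modulo $p$. For an inverse-closed subset $S$ of $\mathbb{Z}_n$ not containing $0$, the circulant graph $\mathrm{Cay}(\mathbb{Z}_n,S)$ has vertex set $\mathbb{Z}_n$, with $u,v$ adjacent iff $v-u\in S$; its degree is $|S|$. A total perfect code in a graph $\Gamma=(V,E)$ is a subset $C\subseteq V$ such that every vertex of $V$ has exactly one neighbour in $C$. *)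

(* Defs.v *)
From mathcomp Require Import all_boot.
Set Implicit Arguments. Unset Strict Implicit. Unset Printing Implicit Defensive.

(* Z_n is modelled by 'I_n (residues 0..n-1) with arithmetic mod n. *)

Definition zsub (n : nat) (v u : 'I_n) : nat := (v + (n - u)) %% n.

Definition zneg (n : nat) (s : 'I_n) : nat := (n - s) %% n.

Definition conn_set (n : nat) (S : {set 'I_n}) : Prop :=
  (forall s, s \in S -> val s != 0) /\
  (forall s, s \in S -> exists2 t, t \in S & val t = zneg s).

Definition cay_adj (n : nat) (S : {set 'I_n}) : rel 'I_n :=
  fun u v => [exists s in S, val s == zsub v u].

Definition cay_connected (n : nat) (S : {set 'I_n}) : Prop :=
  forall u v : 'I_n, connect (cay_adj S) u v.

Definition total_perfect_code (n : nat) (S : {set 'I_n}) (C : {set 'I_n}) : Prop :=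
  forall v : 'I_n, #|[set u in C | cay_adj S v u]| = 1.

(* Main.v *)
From Stdlib Require Classical_Prop.
From mathcomp Require Import all_boot all_order all_algebra.
From mathcomp Require Import algC cyclotomic.
From mathcomp Require Import zify.
Require Import Defs.
Set Implicit Arguments. Unset Strict Implicit. Unset Printing Implicit Defensive.
Import GRing.Theory Num.Theory.
Local Open Scope ring_scope.

Definition FS n (X : {set 'I_n}) (w : algC) : algC := \sum_(x in X) w ^+ x.

Lemma FS_poly n (X : {set 'I_n}) w :
  FS X w = (map_poly ratr (\sum_(x in X) 'X^x : {poly rat})).[w].
Proof.
rewrite rmorph_sum horner_sum; apply: eq_bigr => x _.
by rewrite rmorphXn /= map_polyX hornerXn.
Qed.

Lemma minCpoly_prim N (w w' : algC) :
  N.-primitive_root w -> N.-primitive_root w' -> minCpoly w = minCpoly w'.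
Proof.
move=> pw pw'.
by rewrite (minCpoly_cyclotomic pw) (minCpoly_cyclotomic pw')
   -(Cintr_Cyclotomic pw) -(Cintr_Cyclotomic pw').
Qed.

Lemma galois_FS n (X : {set 'I_n}) N (w w' : algC) :
  N.-primitive_root w -> N.-primitive_root w' -> FS X w = 0 -> FS X w' = 0.
Proof.
move=> pw pw'; rewrite !FS_poly => h.
have [p [Dp _] rp] := minCpolyP w.
have [p' [Dp' _] rp'] := minCpolyP w'.
have E : p = p'.
  apply: (map_poly_inj (ratr : {rmorphism rat -> algC})).
  by rewrite -Dp -Dp'; exact: minCpoly_prim pw pw'.
apply/eqP; rewrite -/(root _ w') rp' -E -rp; exact/eqP.
Qed.

Lemma orth N (z : algC) (m : nat) : N.-primitive_root z ->
  \sum_(i < N) z ^+ (i * m) = if (N %| m)%N then N%:R else 0.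
Proof.
move=> pz.
under eq_bigr => i _ do rewrite mulnC exprM.
case: ifP => hd.
  have -> : z ^+ m = 1 by apply/eqP; rewrite -(prim_order_dvd pz).
  by under eq_bigr => i _ do rewrite expr1n; rewrite sumr_const card_ord.
have ne : z ^+ m - 1 != 0 by rewrite subr_eq0 -(prim_order_dvd pz) hd.
have h := subrX1 (z ^+ m) N.
rewrite -exprM mulnC exprM (prim_expr_order pz) expr1n subrr in h.
by apply/eqP; move/eqP: h; rewrite eq_sym mulf_eq0 (negbTE ne).
Qed.

Lemma dvd_shift N x y : (y < N)%N -> (N %| x + (N - y))%N = (x %% N == y)%N.
Proof.
move=> yN; have N0 : (0 < N)%N by lia.
rewrite /dvdn -modnDml.
have rN : (x %% N < N)%N by rewrite ltn_pmod.
move: (x %% N)%N rN => r rN.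
case: (leqP y r) => h.
  rewrite (_ : (r + (N - y) = r - y + N)%N); last by lia.
  rewrite modnDr modn_small; last by lia.
  by apply/eqP/eqP; lia.
rewrite modn_small; last by lia.
by apply/eqP/eqP; lia.
Qed.

Lemma inversion n (X : {set 'I_n}) N (z : algC) y :
  N.-primitive_root z -> (y < N)%N ->
  \sum_(i < N) FS X (z ^+ i) * z ^+ (i * (N - y))%N =
  (#|[set x in X | (val x %% N == y)%N]| * N)%:R.
Proof.
move=> pz yN; rewrite /FS.
under eq_bigr => i _ do rewrite mulr_suml.
rewrite exchange_big /=.
under eq_bigr => x _ do
  (under eq_bigr => i _ do rewrite -exprM -exprD -mulnDr; rewrite orth // dvd_shift //).
rewrite -big_mkcondr /= sumr_const natrM mulr_natl -cardsE.
congr (_ *+ _); apply: eq_card => x; by rewrite !inE.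
Qed.

Lemma val_subZ n' (u v : 'I_n'.+1) : val (u - v) = zsub u v.
Proof. by rewrite /= /zsub modnDmr. Qed.

Lemma adj_subZ n' (S : {set 'I_n'.+1}) u v : cay_adj S v u = (u - v \in S).
Proof.
rewrite /cay_adj; apply/existsP/idP => [[s /andP[sS /eqP e]] | h].
  by have -> : u - v = s by apply: val_inj; rewrite val_subZ e.
by exists (u - v); rewrite h val_subZ eqxx.
Qed.

Lemma symZ n' (S : {set 'I_n'.+1}) : conn_set S -> forall s, s \in S -> - s \in S.
Proof.
case=> _ h s sS; have [t tS e] := h s sS.
by have <- : t = - s by apply: val_inj; rewrite e.
Qed.

Lemma tiling n' (S C : {set 'I_n'.+1}) (w : algC) :
  conn_set S -> total_perfect_code S C -> w ^+ n'.+1 = 1 ->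
  \sum_(v : 'I_n'.+1) w ^+ v = FS C w * FS S w.
Proof.
move=> cS tpc wn.
have adjE u v : cay_adj S v u = (v - u \in S).
  rewrite adj_subZ; apply/idP/idP => h; rewrite -opprB; exact: symZ.
transitivity (\sum_(v : 'I_n'.+1) \sum_(u in [set u in C | cay_adj S v u]) w ^+ v).
  by apply: eq_bigr => v _; rewrite sumr_const tpc.
transitivity (\sum_(v : 'I_n'.+1) \sum_(u in C) (if v - u \in S then w ^+ v else 0)).
  apply: eq_bigr => v _; rewrite big_mkcond [RHS]big_mkcond; apply: eq_bigr => u _.
  by rewrite inE -adjE; case: (u \in C).
rewrite exchange_big /= /FS mulr_suml; apply: eq_bigr => u _.
rewrite -big_mkcond /= (reindex_inj (addrI u)) /= mulr_sumr.
apply: eq_big => [s | s _]; first by rewrite addrC addKr.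
by rewrite expr_mod // exprD.
Qed.

Lemma geo_sum n (w : algC) : w ^+ n = 1 -> w != 1 -> \sum_(v < n) w ^+ v = 0.
Proof.
move=> wn w1; have h := subrX1 w n; rewrite wn subrr in h.
apply/eqP; move/eqP: h; rewrite eq_sym mulf_eq0 subr_eq0 (negbTE w1) //.
Qed.

Lemma card_part n (X : {set 'I_n}) N : (0 < N)%N ->
  (\sum_(y < N) #|[set x in X | (val x %% N == y)%N]| = #|X|)%N.
Proof.
move=> N0.
under eq_bigr => y _ do rewrite -sum1_card big_mkcond /=.
rewrite exchange_big /= -sum1_card [RHS]big_mkcond /=; apply: eq_bigr => x _.
under eq_bigr => y _ do rewrite inE.
case: (x \in X) => /=; last by rewrite big1.
rewrite (bigD1 (Ordinal (ltn_pmod x N0))) //= eqxx big1 ?addn0 //.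
move=> y ne; case: eqP => // e; case/eqP: ne; exact: val_inj.
Qed.

Lemma sum_mod (g : nat -> nat) M q :
  (\sum_(y < q * M) g (y %% M) = q * \sum_(r < M) g r)%N.
Proof.
rewrite -(big_mkord xpredT (fun y => g (y %% M)%N)) -(big_mkord xpredT g); elim: q => [|q IH]; first by rewrite mul0n big_geq.
rewrite mulSn (big_cat_nat (n := q * M)) /=; last 2 first.
- by [].
- by rewrite leq_addl.
rewrite IH addnC; congr (_ + _)%N.
rewrite -{1}[(q * M)%N]add0n big_addn addnK; apply: eq_big_nat => i /andP[_ iM].
by rewrite addnC modnMDl modn_small.
Qed.

Lemma resZ n' p (u v : 'I_n'.+1) : (p %| n'.+1)%N ->
  ((val (u - v)%R + v) %% p = u %% p)%N.
Proof.
move=> pn; rewrite val_subZ /zsub -modnDml (modn_dvdm _ pn) modnDml -addnA.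
rewrite subnK ?(ltnW (ltn_ord v)) // -modnDmr (eqP pn) addn0 //.
Qed.

Lemma backward n' p (S : {set 'I_n'.+1}) : prime p -> #|S| = p -> (p %| n'.+1)%N ->
  (forall s s' : 'I_n'.+1, s \in S -> s' \in S -> s != s' ->
                 (val s %% p != val s' %% p)%N) ->
  exists C : {set 'I_n'.+1}, total_perfect_code S C.
Proof.
move=> pp hS pn dist; have p0 : (0 < p)%N := prime_gt0 pp.
have dist' s s' : s \in S -> s' \in S -> (val s %% p = val s' %% p)%N -> s = s'.
  move=> sS s'S e; case: (eqVneq s s') => // ne.
  by have := dist _ _ sS s'S ne; rewrite e eqxx.
exists [set u : 'I_n'.+1 | (p %| val u)%N] => v.
pose g := fun s : 'I_n'.+1 => (Ordinal (ltn_pmod (val s) p0) : 'I_p).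
have ginj : {in S &, injective g}.
  by move=> s s' sS s'S e; apply: dist' => //; exact: (congr1 val e).
have im : g @: S = setT.
  by apply/eqP; rewrite eqEcard subsetT cardsT card_ord card_in_imset // hS leqnn.
pose t : 'I_p := Ordinal (ltn_pmod (p - v %% p) p0).
have : t \in g @: S by rewrite im inE.
case/imsetP => s sS ets.
have hs : ((val s + v) %% p = 0)%N.
  have es : (val s %% p = (p - v %% p) %% p)%N by move: (congr1 val ets) => /= ->.
  rewrite -modnDml es modnDml -modnDmr subnK ?modnn //.
  exact: ltnW (ltn_pmod _ p0).
suff -> : [set u in [set u : 'I_n'.+1 | (p %| val u)%N] | cay_adj S v u] = [set v + s].
  by rewrite cards1.
apply/setP => u; rewrite !inE adj_subZ.
apply/andP/eqP => [[pu uvS] | ->].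
  have e : (val (u - v)%R %% p = val s %% p)%N.
    apply/eqP; rewrite -(eqn_modDr v) resZ // hs.
    by rewrite /dvdn in pu.
  have := dist' _ _ uvS sS e => e2.
  by rewrite -e2 addrC subrK.
have e : v + s - v = s by rewrite addrC addKr.
rewrite /dvdn -(resZ _ v pn) (_ : v + s - v = s) ?hs ?eqxx ?sS //; by rewrite addrC addKr.
Qed.

Lemma conn_mod n' p (S : {set 'I_n'.+1}) : (p %| n'.+1)%N ->
  (forall s, s \in S -> val s %% p = 0)%N ->
  forall u v, connect (cay_adj S) u v -> (val u %% p = val v %% p)%N.
Proof.
move=> pn hS u v /connectP [q]; elim: q u => [|x q IH] u /=; first by move=> _ ->.
case/andP => a pth e; rewrite -(IH x pth e); rewrite adj_subZ in a.
by have := resZ x u pn; rewrite -modnDml (hS _ a) add0n.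
Qed.

Lemma sum_two (M : nat) (f : nat -> nat) a b : (a < M)%N -> (b < M)%N -> a != b ->
  (f a + f b <= \sum_(r < M) f r)%N.
Proof.
move=> aM bM ab; rewrite (bigD1 (Ordinal aM)) //= (bigD1 (Ordinal bM)) /=.
  by rewrite addnA leq_addr.
by apply/eqP => /(congr1 val) /= e; rewrite e eqxx in ab.
Qed.

Lemma prim_ex N : (0 < N)%N -> exists z : algC, N.-primitive_root z.
Proof. by move=> N0; have [z pz] := C_prim_root_exists N0; exists z. Qed.

Lemma FS1 n (X : {set 'I_n}) : FS X 1 = #|X|%:R.
Proof. by rewrite /FS; under eq_bigr do rewrite expr1n; rewrite sumr_const. Qed.

Lemma forward n' p (S C : {set 'I_n'.+1}) : prime p -> odd p -> conn_set S ->
  #|S| = p -> cay_connected S -> total_perfect_code S C ->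
  (p %| n'.+1)%N /\ forall s s' : 'I_n'.+1, s \in S -> s' \in S -> s != s' ->
                 (val s %% p != val s' %% p)%N.
Proof.
move=> pp op cS hS conS tpc.
have p1 : (1 < p)%N := prime_gt1 pp.
have p0 : (0 < p)%N := prime_gt0 pp.
have hn : n'.+1 = (#|C| * p)%N.
  have := tiling cS tpc (expr1n _ n'.+1).
  under eq_bigr do rewrite expr1n.
  rewrite sumr_const card_ord !FS1 hS -natrM => /eqP; rewrite eqr_nat => /eqP.
  done.
have pn : (p %| n'.+1)%N by rewrite hn dvdn_mull.
split => //.
set k := logn p n'.+1.
have k1 : (0 < k)%N by rewrite -(pfactor_dvdn 1 pp) // expn1.
have pkn : (p ^ k %| n'.+1)%N by rewrite pfactor_dvdn.
have npk : ~~ (p ^ k.+1 %| n'.+1)%N by rewrite pfactor_dvdn // ltnn.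
have tj j w : (0 < j <= k)%N -> (p ^ j).-primitive_root w -> FS C w * FS S w = 0.
  case/andP => j0 jk pw.
  rewrite -tiling //; last first.
    apply/eqP; rewrite -(prim_order_dvd pw).
    exact: dvdn_trans (dvdn_exp2l p jk) pkn.
  apply: geo_sum.
    apply/eqP; rewrite -(prim_order_dvd pw); exact: dvdn_trans (dvdn_exp2l p jk) pkn.
  apply/eqP => w1; have := prim_order_dvd pw 1; rewrite expr1 w1 eqxx dvdn1 => /eqP e.
  by have := ltn_exp2l 0 j p1; rewrite expn0 e j0 ltnn.
have [[j [hj Pj]] | nA] := Classical_Prop.classic (exists j, (0 < j <= k)%N /\
      forall w, (p ^ j).-primitive_root w -> FS S w = 0); last first.
  have vanC j w : (0 < j <= k)%N -> (p ^ j).-primitive_root w -> FS C w = 0.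
    move=> hj pw; case: (eqVneq (FS C w) 0) => // ne.
    exfalso; apply: nA; exists j; split => // w' pw'.
    apply: (galois_FS pw) => //.
    by have := tj j w hj pw; move/eqP; rewrite mulf_eq0 (negbTE ne) /= => /eqP.
  have N0 : (0 < p ^ k)%N by rewrite expn_gt0 p0.
  have [z pz] := prim_ex N0.
  have := inversion C pz N0.
  rewrite (bigD1 (Ordinal N0)) //= big1 ?addr0; last first.
    move=> i ni.
    have zi : (z ^+ i) ^+ (p ^ k) = 1 by rewrite exprAC (prim_expr_order pz) expr1n.
    have [m pm md] := prim_order_exists N0 zi.
    case/dvdn_pfactor: md => // j jk em; rewrite em in pm.
    have j0 : (0 < j)%N.
      rewrite lt0n; apply/eqP => j0; rewrite j0 expn0 in pm.
      have := prim_expr_order pm; rewrite expr1 => /eqP.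
      rewrite -(prim_order_dvd pz) => /dvdn_leq; rewrite lt0n.
      have iN := ltn_ord i.
      case: (posnP i) => [e | ipos]; last by move=> h; have := h isT; lia.
      by case/eqP: ni; apply: val_inj.
    by rewrite (vanC j) ?j0 ?jk // mul0r.
  rewrite mul0n !expr0 mulr1 FS1 => /eqP; rewrite eqr_nat => /eqP hC.
  by case/negP: npk; rewrite hn hC -mulnA -expnSr dvdn_mull.
case/andP: hj => j0 jk.
case: j j0 jk Pj => // j' _ jk Pj.
pose M := (p ^ j')%N.
have NM : (p ^ j'.+1 = M * p)%N by rewrite expnSr.
have N0 : (0 < p ^ j'.+1)%N by rewrite expn_gt0 p0.
have M0 : (0 < M)%N by rewrite expn_gt0 p0.
have [z pz] := prim_ex N0.
pose f y := #|[set x in S | (val x %% p ^ j'.+1 == y)%N]|.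
have per y : (y + M < p ^ j'.+1)%N -> f y = f (y + M).
  move=> yM.
  have yN : (y < p ^ j'.+1)%N by lia.
  have h1 := inversion S pz yN; have h2 := inversion S pz yM.
  apply/eqP; rewrite -(eqn_pmul2r N0) -(eqr_nat algC) -h1 -h2; apply/eqP.
  apply: eq_bigr => i _.
  case: (boolP (coprime i p)) => cop.
    by rewrite Pj ?mul0r // prim_root_exp_coprime // coprime_pexpr.
  have pi : (p %| i)%N by rewrite coprime_sym prime_coprime // negbK in cop.
  congr (_ * _).
  have e : (i * (p ^ j'.+1 - y) = i * (p ^ j'.+1 - (y + M)) + i * M)%N.
    by rewrite -mulnDr; congr (_ * _); lia.
  rewrite e exprD.
  have -> : z ^+ (i * M) = 1.
    move: (nat_of_ord i) pi => ii pi.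
    by apply/eqP; rewrite -(prim_order_dvd pz) NM (mulnC ii) dvdn_pmul2l.
  by rewrite mulr1.
have fmod y : (y < p ^ j'.+1)%N -> f y = f (y %% M)%N.
  have key q r : (r < M)%N -> (q < p)%N -> f (r + q * M)%N = f r.
    move=> rM; elim: q => [|q IH] qp; first by rewrite mul0n addn0.
    rewrite -IH; last by lia.
    rewrite mulSn (addnC M) addnA; symmetry; apply: per.
    rewrite NM; nia.
  move=> yN; rewrite {1}(divn_eq y M) addnC; apply: key; first by rewrite ltn_pmod.
  by rewrite ltn_divLR // mulnC -NM.
have sumf : (\sum_(r < M) f r = 1)%N.
  have : (\sum_(y < p ^ j'.+1) f y = p)%N by have := card_part S N0; rewrite hS.
  under eq_bigr => y _ do rewrite (fmod y (ltn_ord y)).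
  rewrite NM mulnC sum_mod => /eqP; rewrite -{2}(muln1 p) eqn_pmul2l // => /eqP.
  done.
have fpos s : s \in S -> (0 < f (val s %% M))%N.
  move=> sS.
  have MN : (M %| p ^ j'.+1)%N by rewrite NM dvdn_mulr.
  rewrite -(modn_dvdm (val s) MN) -fmod ?ltn_pmod // card_gt0.
  by apply/set0Pn; exists s; rewrite inE sS eqxx.
have uniq s s' : s \in S -> s' \in S -> (val s %% M = val s' %% M)%N.
  move=> sS s'S; apply/eqP; apply/negPn/negP => ne.
  have := sum_two f (ltn_pmod s M0) (ltn_pmod s' M0) ne.
  rewrite sumf; have := fpos s sS; have := fpos s' s'S; move=> h1 h2 h3; simpl in *; lia.
case: (posnP j') => [j'0 | j'pos].
  subst j'.
  move=> s s' sS s'S ne; apply/negP => /eqP e.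
  have f0 : f 0%N = 1%N by have := sumf; rewrite /M expn0 big_ord1.
  have fy : f (val s %% p)%N = 1%N.
    by rewrite fmod ?expn1 ?ltn_pmod // /M expn0 modn1.
  have c2 : #|[set s; s']| = 2%N by rewrite cards2 ne.
  have : (2 <= f (val s %% p))%N.
    rewrite -c2 /f; apply: subset_leq_card; apply/subsetP => x.
    rewrite !inE expn1 => /orP [] /eqP ->; rewrite ?sS ?s'S ?e eqxx //.
  by rewrite fy.
exfalso.
have pM : (p %| M)%N by rewrite /M dvdn_exp.
have all0 s : s \in S -> (val s %% p = 0)%N.
  move=> sS; have nsS := symZ cS sS.
  have e := uniq _ _ sS nsS.
  have e' : (val s %% p = val (- s)%R %% p)%N.
    by rewrite -(modn_dvdm (val s) pM) e (modn_dvdm _ pM).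
  have h := resZ 0 s pn; rewrite sub0r /= mod0n in h.
  rewrite -modnDm -e' modnDm in h.
  have : (p %| 2 * (val s %% p))%N by rewrite /dvdn mul2n -addnn modnDm h.
  by rewrite Gauss_dvdr ?coprimen2 // /dvdn modn_mod => /eqP.
have n2 : (1 < n'.+1)%N by nia.
have := conn_mod pn all0 (conS 0 (Ordinal n2)).
by rewrite /= mod0n modn_small.
Qed.

Local Close Scope ring_scope.

Theorem theorem1p3 (n p : nat) (S : {set 'I_n}) :
  0 < n -> prime p -> odd p ->
  conn_set S -> #|S| = p -> cay_connected S ->
  (exists C : {set 'I_n}, total_perfect_code S C) <->
  (p %| n /\ forall s s' : 'I_n, s \in S -> s' \in S -> s != s' ->
                 val s %% p != val s' %% p).
Proof.
case: n S => [S n0 | n' S _ pp op cS hS conS]; first by rewrite ltnn in n0.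
split.
  by case=> C tpc; exact: forward.
case=> pn dist; exact: (@backward n' p S pp hS pn dist).
Qed.
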